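(* Either $\liminf_{n\to\infty}\operatorname{Var}(S_n)/n^2>0$, or $\operatorname{Var}(S_n)/n^2\to0$ as $n\to\infty$.
   Context: Let $X_1,X_2,\ldots$ be a sequence of centred, weakly stationary, real random variables with finite second moments, and $S_n=X_1+\cdots+X_n$. *)

(* Defs.v *)
(* No measure/probability library is installed,
   so a probability space is modelled abstractly by its expectation functional
   (a normalized, monotone, linear functional on a vector space of integrable
   real random variables). *)
From Stdlib Require Import Reals.
Open Scope R_scope.

Record ExpSpace := {
  Omega : Type;
  integrable : (Omega -> R) -> Prop;
  E : (Omega -> R) -> R;
  integrable_const : forall c : R, integrable (fun _ => c);
  integrable_plus : forall f g, integrable f -> integrable g ->
      integrable (fun w => f w + g w);
  integrable_scal : forall (c : R) f, integrable f -> integrable (fun w => c * f w);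
  E_plus : forall f g, integrable f -> integrable g ->
      E (fun w => f w + g w) = E f + E g;
  E_scal : forall (c : R) f, integrable f -> E (fun w => c * f w) = c * E f;
  E_mono : forall f g, integrable f -> integrable g ->
      (forall w, f w <= g w) -> E f <= E g;
  E_one : E (fun _ => 1) = 1
}.

Definition Var (P : ExpSpace) (f : Omega P -> R) : R :=
  E P (fun w => f w * f w) - E P f * E P f.

(* Partial sums: Ssum X n = X 0 + ... + X (n-1)  (paper's S_n = X_1+...+X_n,
   with the paper's X_{i+1} written X i here). *)
Fixpoint Ssum {T : Type} (X : nat -> T -> R) (n : nat) (w : T) : R :=
  match n with
  | O => 0
  | S m => Ssum X m w + X m w
  end.

(* Main.v *)
Require Import Defs.
From Stdlib Require Import Reals.
From Stdlib Require Import Psatz Lra Lia Classical FunctionalExtensionality.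
Open Scope R_scope.

Section Aux.
Variable P : ExpSpace.

Lemma integ_ext (f g : Omega P -> R) :
  (forall w, f w = g w) -> integrable P f -> integrable P g.
Proof. intros H; replace g with f; auto. apply functional_extensionality; auto. Qed.

Lemma E_ext (f g : Omega P -> R) : (forall w, f w = g w) -> E P f = E P g.
Proof. intros H; replace g with f; auto. apply functional_extensionality; auto. Qed.

Lemma E0 : E P (fun _ => 0) = 0.
Proof.
  rewrite (E_ext (fun _ => 0) (fun w => 0 * (fun _ => 1) w)) by (intros; ring).
  rewrite E_scal by apply integrable_const. ring.
Qed.

Fixpoint rsum (f : nat -> R) (n : nat) : R :=
  match n with O => 0 | S m => rsum f m + f m end.

Lemma rsum_ext f g n : (forall i, f i = g i) -> rsum f n = rsum g n.
Proof. intros H; induction n; simpl; auto; rewrite IHn, H; auto. Qed.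

Lemma rsum_const c n : rsum (fun _ => c) n = INR n * c.
Proof. induction n; simpl rsum; [simpl; ring|]. rewrite IHn, S_INR; ring. Qed.

Lemma integ_Ssum (G : nat -> Omega P -> R) n :
  (forall i, integrable P (G i)) -> integrable P (Ssum G n).
Proof.
  intros H; induction n; simpl.
  - apply (integrable_const P 0).
  - apply (integrable_plus P (Ssum G n) (G n)); auto.
Qed.

Lemma E_Ssum (G : nat -> Omega P -> R) n :
  (forall i, integrable P (G i)) -> E P (Ssum G n) = rsum (fun i => E P (G i)) n.
Proof.
  intros H; induction n; simpl.
  - apply E0.
  - rewrite (E_plus P (Ssum G n) (G n)); auto. rewrite IHn; auto. apply integ_Ssum; auto.
Qed.

Lemma integ_prodR (f : Omega P -> R) (G : nat -> Omega P -> R) b :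
  (forall j, integrable P (fun w => f w * G j w)) ->
  integrable P (fun w => f w * Ssum G b w).
Proof.
  intros H; induction b; simpl.
  - apply (integ_ext (fun _ => 0)); [intros; ring| apply integrable_const].
  - apply (integ_ext (fun w => f w * Ssum G b w + f w * G b w)); [intros; ring|].
    apply (integrable_plus P (fun w => f w * Ssum G b w) (fun w => f w * G b w)); auto.
Qed.

Lemma integ_prod (F G : nat -> Omega P -> R) a b :
  (forall i j, integrable P (fun w => F i w * G j w)) ->
  integrable P (fun w => Ssum F a w * Ssum G b w).
Proof.
  intros H; induction a; simpl.
  - apply (integ_ext (fun _ => 0)); [intros; ring| apply integrable_const].
  - apply (integ_ext (fun w => Ssum F a w * Ssum G b w + F a w * Ssum G b w)); [intros; ring|].
    apply (integrable_plus P (fun w => Ssum F a w * Ssum G b w) (fun w => F a w * Ssum G b w)); auto.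
    apply integ_prodR; auto.
Qed.

Lemma E_prodR (f : Omega P -> R) (G : nat -> Omega P -> R) b :
  (forall j, integrable P (fun w => f w * G j w)) ->
  E P (fun w => f w * Ssum G b w) = rsum (fun j => E P (fun w => f w * G j w)) b.
Proof.
  intros H; induction b; simpl.
  - rewrite (E_ext _ (fun _ => 0)) by (intros; ring); apply E0.
  - rewrite (E_ext _ (fun w => f w * Ssum G b w + f w * G b w)) by (intros; ring).
    rewrite (E_plus P (fun w => f w * Ssum G b w) (fun w => f w * G b w)); auto.
    rewrite IHb; auto. apply integ_prodR; auto.
Qed.

Lemma E_prod (F G : nat -> Omega P -> R) a b :
  (forall i j, integrable P (fun w => F i w * G j w)) ->
  E P (fun w => Ssum F a w * Ssum G b w) =
  rsum (fun i => rsum (fun j => E P (fun w => F i w * G j w)) b) a.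
Proof.
  intros H; induction a; simpl.
  - rewrite (E_ext _ (fun _ => 0)) by (intros; ring); apply E0.
  - rewrite (E_ext _ (fun w => Ssum F a w * Ssum G b w + F a w * Ssum G b w)) by (intros; ring).
    rewrite (E_plus P (fun w => Ssum F a w * Ssum G b w) (fun w => F a w * Ssum G b w)); auto.
    rewrite IHa, E_prodR; auto. apply integ_prod; auto. apply integ_prodR; auto.
Qed.

End Aux.

Lemma Ssum_ext {T} (F G : nat -> T -> R) n w :
  (forall k, F k w = G k w) -> Ssum F n w = Ssum G n w.
Proof. intros H; induction n; simpl; auto; rewrite IHn, H; auto. Qed.

Lemma Ssum_le {T} (F G : nat -> T -> R) n w :
  (forall k, F k w <= G k w) -> Ssum F n w <= Ssum G n w.
Proof. intros H; induction n; simpl; [lra|]. specialize (H n); lra. Qed.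

Lemma Ssum_sq {T} (F : nat -> T -> R) n w :
  Ssum F n w * Ssum F n w <= INR n * Ssum (fun k w => F k w * F k w) n w.
Proof.
  induction n; simpl Ssum; [simpl; lra|].
  rewrite S_INR.
  set (s := Ssum F n w) in *. set (t := Ssum (fun k w => F k w * F k w) n w) in *.
  set (a := F n w). assert (0 <= INR n) by apply pos_INR.
  assert (0 <= t).
  { unfold t; clear. induction n; simpl; nra. }
  destruct (Req_dec (INR n) 0) as [E0|E0].
  - rewrite E0 in *. assert (s = 0) by nra. subst a; rewrite H1. nra.
  - assert (0 < INR n) by lra.
    assert (H3: (INR n + 1) * (s*s) <= (INR n+1)*(INR n * t)) by (apply Rmult_le_compat_l; lra).
    assert (H4: 0 <= (s - INR n * a) * (s - INR n * a)) by apply Rle_0_sqr.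
    assert (H5: INR n * ((INR n + 1) * (t + a * a) - (s + a) * (s + a)) =
      (INR n + 1) * (INR n * t - s * s) + (s - INR n * a) * (s - INR n * a)) by ring.
    assert (H6: 0 <= INR n * ((INR n + 1) * (t + a * a) - (s + a) * (s + a))) by lra.
    assert (H7: 0 <= ((INR n + 1) * (t + a * a) - (s + a) * (s + a))).
    { apply Rmult_le_reg_l with (INR n); lra. }
    lra.
Qed.

Lemma Ssum_split {T} (F : nat -> T -> R) a b w :
  Ssum F (a + b) w = Ssum F a w + Ssum (fun k => F (a + k)%nat) b w.
Proof.
  induction b; simpl.
  - rewrite Nat.add_0_r; ring.
  - rewrite Nat.add_succ_r; simpl; rewrite IHb; ring.
Qed.

Lemma Ssum_plus {T} (F G : nat -> T -> R) n w :
  Ssum (fun k w => F k w + G k w) n w = Ssum F n w + Ssum G n w.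
Proof. induction n; simpl; [ring|]; rewrite IHn; ring. Qed.

Lemma Ssum_const {T} (c : T -> R) n w : Ssum (fun _ => c) n w = INR n * c w.
Proof. induction n; simpl Ssum; [simpl; ring|]; rewrite IHn, S_INR; ring. Qed.

Lemma Ssum_swap {T} (G : nat -> nat -> T -> R) n m w :
  Ssum (fun k w => Ssum (G k) m w) n w = Ssum (fun j w => Ssum (fun k => G k j) n w) m w.
Proof.
  induction n; simpl.
  - induction m; simpl; auto. rewrite <- IHm; ring.
  - rewrite IHn. rewrite <- Ssum_plus. apply Ssum_ext; intros; reflexivity.
Qed.

Theorem mainTheorem6 (P : ExpSpace) (X : nat -> Omega P -> R)
  (* real random variables with finite second moments *)
  (Hint : forall i, integrable P (X i))
  (Hint2 : forall i j, integrable P (fun w => X i w * X j w))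
  (* centred *)
  (Hcent : forall i, E P (X i) = 0)
  (* weakly stationary: E[X_i X_{i+k}] depends only on k *)
  (Hstat : forall i k, E P (fun w => X i w * X (i + k)%nat w)
                       = E P (fun w => X 0%nat w * X k w)) :
  (* liminf_n Var(S_n)/n^2 > 0 *)
  (exists eps : R, eps > 0 /\ exists N : nat, forall n : nat, (n >= N)%nat ->
       Var P (Ssum X n) / (INR n ^ 2) >= eps)
  \/
  (* Var(S_n)/n^2 -> 0 *)
  Un_cv (fun n : nat => Var P (Ssum X n) / (INR n ^ 2)) 0.
Proof.
  set (a := fun n => E P (fun w => Ssum X n w * Ssum X n w)).
  assert (Hcov : forall k i j, E P (fun w => X (k + i)%nat w * X (k + j)%nat w)
                             = E P (fun w => X i w * X j w)).
  { intros k i j. destruct (Nat.le_gt_cases i j) as [Hij|Hij].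
    - replace j with (i + (j - i))%nat by lia.
      rewrite Nat.add_assoc, Hstat, Hstat; auto.
    - rewrite (E_ext P _ (fun w => X (k + j)%nat w * X (k + i)%nat w)) by (intros; ring).
      rewrite (E_ext P (fun w => X i w * X j w) (fun w => X j w * X i w)) by (intros; ring).
      replace i with (j + (i - j))%nat by lia.
      rewrite Nat.add_assoc, Hstat, Hstat; auto. }
  assert (Hwin : forall k m, E P (fun w => Ssum (fun j => X (k + j)%nat) m w *
                                           Ssum (fun j => X (k + j)%nat) m w) = a m).
  { intros k m. unfold a. rewrite !E_prod by auto.
    apply rsum_ext; intros i; apply rsum_ext; intros j; apply Hcov. }
  assert (Hapos : forall n, 0 <= a n).
  { intros n. rewrite <- (E0 P). apply E_mono.
    - apply integrable_const.
    - apply integ_prod; auto.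
    - intros; nra. }
  assert (Hvar : forall n, Var P (Ssum X n) = a n).
  { intros n. unfold Var, a. rewrite E_Ssum by auto.
    rewrite (rsum_ext _ (fun _ => 0)) by auto. rewrite rsum_const. ring. }
  assert (Key : forall n m, INR m * INR m * a n <=
                  2 * INR n * INR n * a m + 8 * INR m * rsum a m).
  { intros n m.
    set (T := fun k => Ssum (fun j => X (k + j)%nat) m).
    set (U := fun j => Ssum (fun k => X (n + k)%nat) j).
    set (V := fun j => Ssum X j).
    set (G1 := fun k w => T k w * T k w).
    set (G2 := fun j w => U j w * U j w + V j w * V j w).
    assert (IG1 : forall k, integrable P (G1 k)).
    { intros k; unfold G1, T; apply integ_prod; auto. }
    assert (IG2 : forall j, integrable P (G2 j)).
    { intros j; unfold G2. apply (integrable_plus P (fun w => U j w * U j w) (fun w => V j w * V j w));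
      unfold U, V; apply integ_prod; auto. }
    assert (Hmono : E P (fun w => (INR m * INR m) * (Ssum X n w * Ssum X n w)) <=
              E P (fun w => (2 * INR n) * Ssum G1 n w + (4 * INR m) * Ssum G2 m w)).
    { apply E_mono.
      - apply integrable_scal, integ_prod; auto.
      - apply (integrable_plus P (fun w => (2 * INR n) * Ssum G1 n w) (fun w => (4 * INR m) * Ssum G2 m w));
          apply integrable_scal, integ_Ssum; auto.
      - intros w.
        assert (Hid : Ssum (fun k w => T k w) n w =
                      INR m * Ssum X n w + Ssum (fun j w => U j w - V j w) m w).
        { unfold T. rewrite Ssum_swap.
          rewrite (Ssum_ext _ (fun j w => Ssum X n w + (U j w - V j w))).
          - rewrite Ssum_plus, Ssum_const; reflexivity.
          - intros j. unfold U, V.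
            pose proof (Ssum_split X j n w) as H1.
            pose proof (Ssum_split X n j w) as H2.
            rewrite Nat.add_comm in H1. rewrite H1 in H2.
            rewrite (Ssum_ext (fun k => X (k + j)%nat) (fun k => X (j + k)%nat)).
            + lra.
            + intros; rewrite Nat.add_comm; auto. }
        pose proof (Ssum_sq (fun k w => T k w) n w) as Q1.
        pose proof (Ssum_sq (fun j w => U j w - V j w) m w) as Q2.
        assert (Q3 : Ssum (fun k w => (U k w - V k w) * (U k w - V k w)) m w
                     <= 2 * Ssum G2 m w).
        { replace (2 * Ssum G2 m w) with (Ssum (fun j w => 2 * G2 j w) m w).
          - apply Ssum_le; intros; unfold G2.
            pose proof (Rle_0_sqr (U k w + V k w)); unfold Rsqr in *; lra.
          - clear. induction m; simpl; [ring|]. rewrite IHm; ring. }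
        cbv beta in Q1, Q2.
        change (Ssum (fun k w => T k w * T k w) n w) with (Ssum G1 n w) in Q1.
        assert (0 <= INR m) by apply pos_INR.
        assert (0 <= INR n) by apply pos_INR.
        set (A := Ssum (fun k w => T k w) n w) in *.
        set (D := Ssum (fun j w => U j w - V j w) m w) in *.
        assert (HmS : INR m * Ssum X n w = A - D) by lra.
        assert (Hsq : INR m * INR m * (Ssum X n w * Ssum X n w) <= 2 * (A*A) + 2 * (D*D)).
        { replace (INR m * INR m * (Ssum X n w * Ssum X n w)) with ((A - D) * (A - D))
            by (rewrite <- HmS; ring).
          pose proof (Rle_0_sqr (A + D)); unfold Rsqr in *; lra. }
        assert (Q4 : INR m * Ssum (fun k w => (U k w - V k w) * (U k w - V k w)) m w
                     <= INR m * (2 * Ssum G2 m w)) by (apply Rmult_le_compat_l; lra).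
        cbv beta. lra. }
    rewrite E_scal in Hmono by (apply integ_prod; auto).
    rewrite (E_plus P (fun w => (2 * INR n) * Ssum G1 n w) (fun w => (4 * INR m) * Ssum G2 m w)) in Hmono
      by (apply integrable_scal, integ_Ssum; auto).
    rewrite !E_scal, !E_Ssum in Hmono by (auto; apply integ_Ssum; auto).
    rewrite (rsum_ext _ (fun _ => a m)) in Hmono.
    2: { intros k; unfold G1, T; apply Hwin. }
    rewrite (rsum_ext (fun i => E P (G2 i)) (fun j => 2 * a j)) in Hmono.
    2: { intros j. unfold G2. rewrite (E_plus P (fun w => U j w * U j w) (fun w => V j w * V j w))
         by (unfold U, V; apply integ_prod; auto).
         unfold U, V. rewrite Hwin. fold (a j). ring. }
    rewrite rsum_const in Hmono.
    replace (rsum (fun j => 2 * a j) m) with (2 * rsum a m) in Hmono.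
    - fold (a n) in Hmono. lra.
    - clear. induction m; simpl; [ring|]. rewrite <- IHm; ring. }
  destruct (classic (exists eps : R, eps > 0 /\ exists N : nat, forall n : nat, (n >= N)%nat ->
       Var P (Ssum X n) / (INR n ^ 2) >= eps)) as [H|H]; [left; exact H|right].
  assert (Hsmall : forall eps, eps > 0 -> forall N, exists n, (n >= N)%nat /\ a n / (INR n ^ 2) < eps).
  { intros eps He N. apply NNPP; intros Hn. apply H. exists eps; split; auto. exists N.
    intros n Hn'. rewrite Hvar. destruct (Rlt_or_le (a n / (INR n ^ 2)) eps) as [Hl|Hl]; [|lra].
    exfalso; apply Hn; exists n; auto. }
  intros eps He.
  destruct (Hsmall (eps / 4) ltac:(lra) 1%nat) as [m [Hm1 Hm]].
  assert (Mpos : 0 < INR m) by (apply lt_0_INR; lia).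
  set (C := 8 * INR m * rsum a m).
  assert (C >= 0).
  { unfold C. assert (0 <= rsum a m) by (clear - Hapos; induction m; simpl; auto; [lra| specialize (Hapos m); lra]). nra. }
  destruct (INR_unbounded (2 * C / (INR m * INR m * eps))) as [N HN].
  exists (Nat.max N 1). intros n Hn.
  assert (Nn : INR N <= INR n) by (apply le_INR; lia).
  assert (Npos : 1 <= INR n) by (change 1 with (INR 1); apply le_INR; lia).
  unfold R_dist. rewrite Rminus_0_r, Hvar.
  assert (Hn2 : 0 < INR n ^ 2) by (apply pow_lt; lra).
  rewrite Rabs_right by (apply Rle_ge; unfold Rdiv; apply Rmult_le_pos; [auto|left; apply Rinv_0_lt_compat; auto]).
  apply Rmult_lt_reg_r with (INR n ^ 2); auto.
  unfold Rdiv; rewrite Rmult_assoc, Rinv_l, Rmult_1_r by lra.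
  assert (Ham : a m < eps / 4 * (INR m * INR m)).
  { apply Rmult_lt_compat_r with (r := INR m ^ 2) in Hm; [|apply pow_lt; lra].
    unfold Rdiv in Hm; rewrite Rmult_assoc, Rinv_l, Rmult_1_r in Hm by (apply pow_nonzero; lra).
    simpl in Hm; lra. }
  assert (HC : C < eps / 2 * (INR m * INR m) * INR n).
  { assert (0 < INR m * INR m * eps) by (apply Rmult_lt_0_compat; nra).
    assert (2 * C / (INR m * INR m * eps) < INR n) by lra.
    apply Rmult_lt_compat_r with (r := INR m * INR m * eps) in H2; auto.
    unfold Rdiv in H2; rewrite Rmult_assoc, Rinv_l, Rmult_1_r in H2 by lra. lra. }
  pose proof (Key n m) as K. fold C in K.
  assert (INR m * INR m * a n < INR m * INR m * (eps * INR n ^ 2)).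
  { simpl. nra. }
  apply Rmult_lt_reg_l with (INR m * INR m); nra.
Qed.
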